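(* Let $k$ be a field of characteristic $p>0$, let $k'/k$ be a purely inseparable finite field extension of degree $q$ with $k$-basis $\{1=\alpha_1,\alpha_2,\dots,\alpha_q\}$, let $C=\mathrm{R}_{k'/k}(\mathbb{G}_m)$, embedded in affine $q$-space $\mathbb{A}_q$ via coordinates with respect to this basis, and let $U$ be the unipotent radical of $C_{\bar k}$. Let $A$ be a $\bar k$-algebra and $a=(a_1,\dots,a_q)\in C_{\bar k}(A)\subseteq\mathbb{A}_q(A)$. Then $a\in U(A)$ if and only if $a_1=1-\sum_{2\le i\le q}a_i\alpha_i$.
   Context: Here a point $a=(a_1,\dots,a_q)$ of $C_{\bar k}(A)$ corresponds to the unit $\sum_i\alpha_i\otimes a_i\in k'\otimes_k A$, and $\alpha_i\in k'\subseteq\bar k$. *)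

(* Defs.v *)
From HB Require Import structures.
From mathcomp Require Import all_boot all_order all_algebra.
From mathcomp Require Import mpoly.
Set Implicit Arguments. Unset Strict Implicit. Unset Printing Implicit Defensive.
Import Order.TTheory GRing.Theory.
Local Open Scope ring_scope.

(* Setting: F = k, L = kbar (algebraically closed, algebraic over iota(F)),
   alpha : 'I_q -> L the k-basis 1 = alpha_1, ..., alpha_q of k' (viewed inside
   kbar), c i j l the structure constants alpha_i alpha_j = sum_l c_ijl alpha_l. *)

Section Defs.
Variables (F : fieldType) (L : closedFieldType) (iota : {rmorphism F -> L}).
Variables (q : nat) (alpha : 'I_q -> L) (c : 'I_q -> 'I_q -> 'I_q -> F).

Definition in_kprime (x : L) : Prop :=
  exists b : 'I_q -> F, x = \sum_i iota (b i) * alpha i.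

Definition alpha_free : Prop :=
  forall b : 'I_q -> F, \sum_i iota (b i) * alpha i = 0 -> forall i, b i = 0.

Definition struct_consts : Prop :=
  forall i j, alpha i * alpha j = \sum_l iota (c i j l) * alpha l.

Definition purely_insep (p : nat) : Prop :=
  forall x, in_kprime x -> exists n : nat, exists y : F, x ^+ (p ^ n) = iota y.

Definition algebraic_over : Prop :=
  forall x : L, exists2 P : {poly F}, P != 0 & root (map_poly iota P) x.

(* k' (x) A, for a kbar-algebra A, written in coordinates w.r.t. the basis
   alpha_i (x) 1: a point a : 'I_q -> A stands for sum_i alpha_i (x) a_i. *)
Section Tensor.
Variable A : comAlgType L.

Definition tmul (a b : 'I_q -> A) : 'I_q -> A :=
  fun l => \sum_i \sum_j a i * b j * (iota (c i j l))%:A.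

(* the unit 1 = alpha_1 (x) 1; i0 is the index of alpha_1 *)
Definition tone (i0 : 'I_q) : 'I_q -> A := fun l => if l == i0 then 1 else 0.

(* C_kbar(A) = (k' (x)_k A)^x, C = R_{k'/k}(G_m) *)
Definition C_pts (i0 : 'I_q) (a : 'I_q -> A) : Prop :=
  exists b : 'I_q -> A, tmul a b = tone i0.
End Tensor.

(* matrix of multiplication by a in k' (x) kbar w.r.t. the basis alpha_i (x) 1
   (the regular representation C_kbar -> GL_q) *)
Definition mulmx_of (a : 'I_q -> L) : 'M[L]_q :=
  \matrix_(l, j) \sum_i a i * iota (c i j l).

Definition unipotent_pt (a : 'I_q -> L) : Prop :=
  exists m : nat, (mulmx_of a - 1%:M) ^+ m = 0.

(* Unipotent radical U of the commutative smooth connected group C_kbar: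
   its kbar-points are the unipotent elements of C(kbar); as U is smooth
   (reduced) it is the reduced closed subscheme of A_q with these points,
   i.e. cut out by the ideal of polynomials vanishing on them. *)
Definition U_ideal (i0 : 'I_q) (f : {mpoly L[q]}) : Prop :=
  forall x : 'I_q -> L, C_pts (A := L^o) i0 x -> unipotent_pt x -> f.@[x] = 0.

Definition U_pts (A : comAlgType L) (i0 : 'I_q) (a : 'I_q -> A) : Prop :=
  C_pts i0 a /\
  forall f : {mpoly L[q]}, U_ideal i0 f -> mmap (fun z : L => z%:A) a f = 0.

End Defs.

(* Main.v *)
Require Import Defs.
From HB Require Import structures.
From mathcomp Require Import all_boot all_order all_algebra.
From mathcomp Require Import mpoly.
From Stdlib Require Import FunctionalExtensionality.
Import GRing.Theory.
Local Open Scope ring_scope.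
Set Implicit Arguments. Unset Strict Implicit. Unset Printing Implicit Defensive.

Lemma frob_sum (R : nzRingType) (p : nat) (hp : p \in [pchar R]) (I : Type)
  (r : seq I) (f : I -> R) :
  (forall i j, GRing.comm (f i) (f j)) ->
  forall e, (\sum_(i <- r) f i) ^+ (p ^ e) = \sum_(i <- r) f i ^+ (p ^ e).
Proof.
move=> hc; elim=> [|e IH]; first by rewrite expn0 expr1; apply: eq_bigr => i _; rewrite expr1.
rewrite expnSr exprM IH.
have hc' : forall i j, GRing.comm (f i ^+ (p ^ e)) (f j ^+ (p ^ e)).
  by move=> i j; apply/commrX/commr_sym/commrX/commr_sym.
elim: r {IH} => [|a r IHr]; first by rewrite !big_nil expr0n; case: (p) (pcharf_prime hp).
rewrite !big_cons -!(pFrobenius_autE hp) pFrobenius_autD_comm.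
  by rewrite !(pFrobenius_autE hp) IHr; congr (_ + _); rewrite -exprM -expnSr.
by apply: commr_sum => j _; apply: hc'.
Qed.

Definition Cm (F : fieldType) (L : closedFieldType) (iota : {rmorphism F -> L})
  (q : nat) (c : 'I_q -> 'I_q -> 'I_q -> F) (i : 'I_q) : 'M[L]_q :=
  \matrix_(l, j) iota (c i j l).

Definition rep (F : fieldType) (L : closedFieldType) (iota : {rmorphism F -> L})
  (q : nat) (alpha : 'I_q -> L) (x : L) (B : 'M[L]_q) : Prop :=
  exists b : 'I_q -> 'I_q -> F, B = \matrix_(l, j) iota (b l j) /\
     forall j, x * alpha j = \sum_l iota (b l j) * alpha l.

Lemma coord_uniq (F : fieldType) (L : closedFieldType) (iota : {rmorphism F -> L})
  (q : nat) (alpha : 'I_q -> L) (hfree : alpha_free iota alpha) (b b' : 'I_q -> F) :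
  \sum_i iota (b i) * alpha i = \sum_i iota (b' i) * alpha i -> forall i, b i = b' i.
Proof.
move=> /eqP; rewrite -subr_eq0 -sumrB => /eqP H i.
apply/eqP; rewrite -subr_eq0; apply/eqP; apply: (hfree (fun i => b i - b' i)) => //.
by rewrite -[RHS]H; apply: eq_bigr => k _; rewrite rmorphB mulrBl.
Qed.

Lemma rep_func (F : fieldType) (L : closedFieldType) (iota : {rmorphism F -> L}) (q : nat) (alpha : 'I_q -> L) (hfree : alpha_free iota alpha) x B B' :
  rep iota alpha x B -> rep iota alpha x B' -> B = B'.
Proof.
move=> [b [-> Hb]] [b' [-> Hb']]; apply/matrixP => l j; rewrite !mxE.
by congr (iota _); apply: (coord_uniq hfree (b := fun l => b l j) (b' := fun l => b' l j)); rewrite /= -Hb -Hb'.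
Qed.

Lemma rep_mul (F : fieldType) (L : closedFieldType) (iota : {rmorphism F -> L}) (q : nat) (alpha : 'I_q -> L) x y B B' :
  rep iota alpha x B -> rep iota alpha y B' -> rep iota alpha (x * y) (B *m B').
Proof.
move=> [b [-> Hb]] [b' [-> Hb']].
exists (fun l j => \sum_k b l k * b' k j); split.
  apply/matrixP => l j; rewrite !mxE rmorph_sum; apply: eq_bigr => k _.
  by rewrite !mxE rmorphM.
move=> j; rewrite -mulrA Hb' mulr_sumr.
under eq_bigr => k _ do rewrite mulrCA Hb mulr_sumr.
rewrite exchange_big /=; apply: eq_bigr => l _.
rewrite rmorph_sum mulr_suml; apply: eq_bigr => k _.
by rewrite rmorphM mulrA (mulrC (iota (b l k))).
Qed.

Lemma rep_scalar (F : fieldType) (L : closedFieldType) (iota : {rmorphism F -> L}) (q : nat) (alpha : 'I_q -> L) (y : F) :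
  rep iota alpha (iota y) (iota y)%:M.
Proof.
exists (fun l j => y * (l == j)%:R); split.
  apply/matrixP => l j; rewrite !mxE; case: eqP => _; by rewrite ?mulr1 ?mulr0 ?rmorph0.
move=> j; rewrite (bigD1 j) //= eqxx mulr1 big1 ?addr0 // => l /negbTE ->.
by rewrite mulr0 rmorph0 mul0r.
Qed.

Lemma rep_one (F : fieldType) (L : closedFieldType) (iota : {rmorphism F -> L}) (q : nat) (alpha : 'I_q -> L) : rep iota alpha 1 1%:M.
Proof. by have := rep_scalar iota alpha 1; rewrite rmorph1. Qed.

Lemma rep_pow (F : fieldType) (L : closedFieldType) (iota : {rmorphism F -> L}) (q : nat) (alpha : 'I_q.+1 -> L) x B k :
  rep iota alpha x B -> rep iota alpha (x ^+ k) (B ^+ k).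
Proof.
move=> H; elim: k => [|k IH]; first by rewrite !expr0; apply: rep_one.
by rewrite !exprSr -mulmxE; apply: rep_mul.
Qed.

Lemma rep_alpha (F : fieldType) (L : closedFieldType) (iota : {rmorphism F -> L}) (q : nat) (alpha : 'I_q -> L) c (hconst : struct_consts iota alpha c) i :
  rep iota alpha (alpha i) (Cm iota c i).
Proof. by exists (fun l j => c i j l); split => // j; rewrite hconst. Qed.

Lemma alpha_pow (F : fieldType) (p : nat) (L : closedFieldType) (iota : {rmorphism F -> L})
  (q : nat) (alpha : 'I_q -> L) (hinsep : purely_insep iota alpha p) :
  exists e, forall i, exists y, alpha i ^+ (p ^ e) = iota y.
Proof.
have H : forall i, exists u : nat * F, alpha i ^+ (p ^ u.1) = iota u.2.
  move=> i; have [|e [y Hy]] := hinsep (alpha i).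
    exists (fun k => (k == i)%:R); rewrite (bigD1 i) //= eqxx rmorph1 mul1r.
    by rewrite big1 ?addr0 // => k /negbTE ->; rewrite rmorph0 mul0r.
  by exists (e, y).
have [u Hu] := fin_all_exists H.
exists (\max_i (u i).1) => i.
have le : ((u i).1 <= \max_i (u i).1)%N by apply: (leq_bigmax_cond (P := xpredT)).
exists ((u i).2 ^+ (p ^ (\max_i (u i).1 - (u i).1))).
by rewrite -{1}(subnKC le) expnD exprM Hu rmorphXn.
Qed.

Lemma unip (F : fieldType) (p : nat) (hchar : p \in [pchar F])
  (L : closedFieldType) (iota : {rmorphism F -> L}) (n : nat)
  (alpha : 'I_n.+1 -> L) (c : 'I_n.+1 -> 'I_n.+1 -> 'I_n.+1 -> F)
  (i0 : 'I_n.+1) (h1 : alpha i0 = 1) (hfree : alpha_free iota alpha)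
  (hconst : struct_consts iota alpha c) (hinsep : purely_insep iota alpha p)
  (x : 'I_n.+1 -> L) (hx : \sum_i x i * alpha i = 1) :
  exists e, (mulmx_of iota c x - 1%:M) ^+ (p ^ e) = 0.
Proof.
have hpL : p \in [pchar L] := rmorph_pchar iota hchar.
have hpM : p \in [pchar 'M[L]_n.+1] by rewrite pchar_lalg.
have Ccomm : forall i j, GRing.comm (Cm iota c i) (Cm iota c j).
  move=> i j; rewrite /GRing.comm -!mulmxE.
  apply: (rep_func hfree (x := alpha i * alpha j)); first by apply: rep_mul; apply: rep_alpha.
  by rewrite mulrC; apply: rep_mul; apply: rep_alpha.
have C0 : Cm iota c i0 = 1%:M.
  apply: (rep_func hfree (x := 1)); last exact: rep_one.
  by rewrite -h1; apply: rep_alpha.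
have Mx : forall y, mulmx_of iota c y = \sum_i y i *: Cm iota c i.
  move=> y; apply/matrixP => l j; rewrite !mxE summxE; apply: eq_bigr => i _.
  by rewrite !mxE.
set d := fun i => x i - (i == i0)%:R.
have Hd : \sum_i d i * alpha i = 0.
  rewrite /d; under eq_bigr => i _ do rewrite mulrBl.
  rewrite sumrB hx (bigD1 i0) //= eqxx mul1r h1 big1 ?addr0 ?subrr // => i /negbTE ->.
  by rewrite mul0r.
have HN : mulmx_of iota c x - 1%:M = \sum_i d i *: Cm iota c i.
  rewrite Mx /d; under [RHS]eq_bigr => i _ do rewrite scalerBl.
  rewrite sumrB; congr (_ - _).
  rewrite (bigD1 i0) //= eqxx scale1r C0 big1 ?addr0 // => i /negbTE ->.
  by rewrite scale0r.
have [e He] := alpha_pow hinsep.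
exists e; rewrite HN (frob_sum hpM); last first.
  by move=> i j; rewrite /GRing.comm -scalerAl -scalerAr -scalerAl -scalerAr Ccomm !scalerA mulrC.
have -> : \sum_i (d i *: Cm iota c i) ^+ (p ^ e) = \sum_i ((d i * alpha i) ^+ (p ^ e))%:M.
  apply: eq_bigr => i _; have [y Hy] := He i.
  have R1 := rep_pow (p ^ e) (rep_alpha hconst i); rewrite Hy in R1.
  rewrite exprZn (rep_func hfree R1 (rep_scalar iota alpha y)).
  by rewrite scale_scalar_mx exprMn Hy.
rewrite -(raddf_sum (@scalar_mx L n.+1)) -(frob_sum hpL); last by move=> i j; apply: mulrC.
by rewrite Hd expr0n eqn0Ngt expn_gt0 (prime_gt0 (pcharf_prime hpL)) /= raddf0.
Qed.

Lemma cpts_of_nil (F : fieldType) (L : closedFieldType) (iota : {rmorphism F -> L}) (n : nat)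
  (c : 'I_n.+1 -> 'I_n.+1 -> 'I_n.+1 -> F) (i0 : 'I_n.+1) (x : 'I_n.+1 -> L) (e : nat) :
  (mulmx_of iota c x - 1%:M) ^+ e = 0 -> C_pts (A := L^o) iota c i0 x.
Proof.
set N := mulmx_of iota c x - 1%:M => HN.
pose S := \sum_(k < e) (- N) ^+ k.
have HS : mulmx_of iota c x *m S = 1%:M.
  have := subrX1 (- N) e; rewrite exprNn HN mulr0 sub0r -opprD mulNr => /oppr_inj.
  by rewrite /N subrK mulmxE => <-.
exists (fun j => S j i0); apply: functional_extensionality => l.
rewrite /tmul /tone.
have -> : (if l == i0 then (1 : L^o) else 0) = (1%:M : 'M[L]_n.+1) l i0 by rewrite mxE; case: eqP.
rewrite -HS mxE exchange_big /=; apply: eq_bigr => j _; rewrite !mxE mulr_suml.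
apply: eq_bigr => i _.
have E : forall r : L, (r%:A : L^o) = r by move=> r; exact: mulr1.
by rewrite E mulrAC.
Qed.
Lemma eig_lemma (F : fieldType) (L : closedFieldType) (iota : {rmorphism F -> L})
  (q : nat) (alpha : 'I_q -> L) (c : 'I_q -> 'I_q -> 'I_q -> F)
  (hconst : struct_consts iota alpha c) (i0 : 'I_q) (h1 : alpha i0 = 1)
  (x : 'I_q -> L) :
  unipotent_pt iota c x -> \sum_i x i * alpha i = 1.
Proof.
move=> [m Hm].
set l := \sum_i x i * alpha i.
pose w : 'rV[L]_q := \row_j alpha j.
have Hw : w *m mulmx_of iota c x = l *: w.
  apply/rowP => j; rewrite !mxE /l mulr_suml.
  under eq_bigr => k _ do rewrite !mxE.
  under [RHS]eq_bigr => i _ do rewrite -mulrA hconst mulr_sumr.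
  rewrite exchange_big /=; apply: eq_bigr => k _.
  rewrite mulr_sumr; apply: eq_bigr => i _.
  by rewrite mulrC -mulrA.
have Hp : forall k, w *m (mulmx_of iota c x - 1%:M) ^+ k = (l - 1) ^+ k *: w.
  elim=> [|k IH]; first by rewrite !expr0 scale1r mulmx1.
  rewrite exprSr -mulmxE mulmxA IH -scalemxAl mulmxBr Hw mulmx1 -{2}(scale1r w) -scalerBl.
  by rewrite scalerA -exprSr.
have := Hp m; rewrite Hm mulmx0 => /rowP /(_ i0); rewrite !mxE h1 mulr1.
by move/esym/eqP; rewrite expf_eq0 subr_eq0 => /andP[_ /eqP].
Qed.
Lemma mpoly_ext (R : ringType) (S : comRingType) (n : nat) (g1 g2 : {mpoly R[n]} -> S) :
  (forall p q, g1 (p + q) = g1 p + g1 q) -> (forall p q, g2 (p + q) = g2 p + g2 q) ->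
  (forall p q, g1 (p * q) = g1 p * g1 q) -> (forall p q, g2 (p * q) = g2 p * g2 q) ->
  g1 1 = 1 -> g2 1 = 1 -> g1 0 = 0 -> g2 0 = 0 ->
  (forall c, g1 c%:MP = g2 c%:MP) -> (forall i, g1 'X_i = g2 'X_i) ->
  forall p, g1 p = g2 p.
Proof.
move=> D1 D2 M1 M2 O1 O2 Z1 Z2 HC HX.
have P1 : forall x k, g1 (x ^+ k) = g1 x ^+ k.
  by move=> x; elim=> [|k IH]; rewrite ?expr0 ?O1 // !exprS M1 IH.
have P2 : forall x k, g2 (x ^+ k) = g2 x ^+ k.
  by move=> x; elim=> [|k IH]; rewrite ?expr0 ?O2 // !exprS M2 IH.
elim/mpolyind => [|c m p _ _ IH]; first by rewrite Z1 Z2.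
rewrite D1 D2 IH -mul_mpolyC M1 M2 HC mpolyXE_id.
rewrite (big_morph g1 M1 O1) (big_morph g2 M2 O2); congr (_ * _ + _).
by apply: eq_bigr => i _; rewrite P1 P2 HX.
Qed.

Lemma uniq_seq (R : eqType) (hinf : forall s : seq R, exists x, x \notin s) k :
  exists s : seq R, uniq s && (size s == k).
Proof.
elim: k => [|k [s /andP[us /eqP ss]]]; first by exists [::].
have [x hx] := hinf s; exists (x :: s); by rewrite /= hx us ss eqxx.
Qed.

Lemma poly_vanish (R : idomainType) (hinf : forall s : seq R, exists x, x \notin s)
  (Q : {poly R}) : (forall t, Q.[t] = 0) -> Q = 0.
Proof.
move=> H; have [s /andP[us /eqP ss]] := uniq_seq hinf (size Q).
apply: (roots_geq_poly_eq0 (rs := s)) => //; last by rewrite ss.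
by apply/allP => x _; apply/rootP.
Qed.

Lemma mpoly_vanish (R : idomainType) (hinf : forall s : seq R, exists x, x \notin s) :
  forall n (p : {mpoly R[n]}), (forall v, p.@[v] = 0) -> p = 0.
Proof.
elim=> [|n IH] p H.
  have := H (fun _ => 0); rewrite {1}(nvar0_mpolyC p) mevalC => E.
  by rewrite (nvar0_mpolyC p) E mpolyC0.
have key : forall (v : 'I_n -> R) (t : R) (w : 'I_n.+1 -> R),
    (forall j, w (widen_ord (leqnSn n) j) = v j) -> w ord_max = t ->
    forall p : {mpoly R[n.+1]}, (map_poly (meval v) (muni p)).[t] = p.@[w].
  move=> v t w Hw Ht.
  apply: (mpoly_ext (g1 := fun p => (map_poly (meval v) (muni p)).[t]) (g2 := meval w)).
  - by move=> p1 p2; rewrite /= !raddfD /= hornerD.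
  - by move=> p1 p2; rewrite raddfD.
  - by move=> p1 p2; rewrite /= !rmorphM /= hornerM.
  - by move=> p1 p2; rewrite rmorphM.
  - by rewrite /= !rmorph1 hornerC.
  - by rewrite rmorph1.
  - by rewrite /= !raddf0 horner0.
  - by rewrite raddf0.
  - by move=> c; rewrite /= muniC map_polyC hornerC /= !mevalC.
  move=> i; rewrite /= mevalXU /muni mmapX mmap1U.
  case: splitP => [j Hj | k Hk].
    rewrite map_polyC hornerC /= mevalXU -Hw; congr w; apply: val_inj => /=.
    by rewrite -Hj.
  rewrite map_polyX hornerX -Ht; congr w; apply: val_inj => /=.
  by move: Hk; rewrite /= (ord1 k) addn0.
have Hc : forall k, (muni p)`_k = 0.
  move=> k; apply: IH => v.
  have HQ : map_poly (meval v) (muni p) = 0.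
    apply: (@poly_vanish R hinf) => t.
    rewrite (key v t (fun i => oapp v t (unlift ord_max i))) ?H //.
      move=> j; have -> : widen_ord (leqnSn n) j = lift ord_max j.
        by apply: val_inj; rewrite /= /bump leqNgt ltn_ord.
      by rewrite liftK.
    by rewrite /= unlift_none.
  by have := congr1 (fun Q : {poly R} => Q`_k) HQ; rewrite /= coef_map coef0.
have Hm : muni p = 0 by apply/polyP => k; rewrite Hc coef0.
pose T := [tuple ('X_(widen_ord (leqnSn n) j) : {mpoly R[n.+1]}) | j < n].
have back : forall r : {mpoly R[n.+1]}, (map_poly (comp_mpoly T) (muni r)).['X_ord_max] = r.
  apply: (mpoly_ext (g1 := fun r => (map_poly (comp_mpoly T) (muni r)).['X_ord_max]) (g2 := id)) => //.
  - by move=> p1 p2; rewrite /= !raddfD /= hornerD.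
  - by move=> p1 p2; rewrite /= !rmorphM /= hornerM.
  - by rewrite /= !rmorph1 hornerC.
  - by rewrite /= !raddf0 horner0.
  - by move=> c; rewrite /= muniC map_polyC hornerC /= /comp_mpoly mmapC.
  move=> i; rewrite /= /muni mmapX mmap1U.
  case: splitP => [j Hj | k Hk].
    rewrite map_polyC hornerC /= comp_mpolyXU -tnth_nth tnth_mktuple; congr 'X__.
    by apply: val_inj => /=; rewrite -Hj.
  rewrite map_polyX hornerX; congr 'X__; apply: val_inj => /=.
  by move: Hk; rewrite /= (ord1 k) addn0.
by rewrite -(back p) Hm rmorph0 horner0.
Qed.

Lemma closed_inf (L : closedFieldType) (s : seq L) : exists x, x \notin s.
Proof.
pose Q := \prod_(y <- s) ('X - y%:P).
have Q0 : Q != 0 by apply: monic_neq0; apply: monic_prod_XsubC.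
have sz : size (Q * 'X + 1) = (size Q).+1.
  rewrite size_addl ?size_mulX // size_poly1 ltnS lt0n size_poly_eq0 //.
have [x Hx] : exists x, root (Q * 'X + 1) x.
  by apply/closed_rootP; rewrite sz eqSS size_poly_eq0.
exists x; apply/negP => xs.
have : root Q x by rewrite root_prod_XsubC.
move/rootP => Qx; move/rootP: Hx; rewrite hornerD hornerMX Qx mul0r hornerC add0r.
by move/eqP; rewrite oner_eq0.
Qed.

Lemma mmap_comp (K S : comRingType) (g : {rmorphism K -> S}) n (T : n.-tuple {mpoly K[n]})
  (a : 'I_n -> S) (f : {mpoly K[n]}) :
  mmap g a (f \mPo T) = mmap g (fun i => mmap g a (tnth T i)) f.
Proof.
apply: (mpoly_ext (g1 := fun f => mmap g a (f \mPo T)) (g2 := mmap g (fun i => mmap g a (tnth T i)))).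
- by move=> p1 p2; rewrite /= !raddfD.
- by move=> p1 p2; rewrite raddfD.
- by move=> p1 p2; rewrite /= !rmorphM.
- by move=> p1 p2; rewrite rmorphM.
- by rewrite /= !rmorph1.
- by rewrite rmorph1.
- by rewrite /= !raddf0.
- by rewrite raddf0.
- by move=> c; rewrite /= comp_mpolyC !mmapC.
by move=> i; rewrite /= comp_mpolyXU -tnth_nth mmapX mmap1U.
Qed.

Unset Implicit Arguments.
Set Strict Implicit.

Theorem lemma5p3
  (F : fieldType) (p : nat) (hp : prime p) (hchar : p \in [pchar F])
  (L : closedFieldType) (iota : {rmorphism F -> L})
  (halg : algebraic_over iota)
  (q : nat) (hq : (0 < q)%N) (alpha : 'I_q -> L)
  (c : 'I_q -> 'I_q -> 'I_q -> F)
  (h1 : alpha (Ordinal hq) = 1)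
  (hfree : alpha_free iota alpha)
  (hconst : struct_consts iota alpha c)
  (hinv : forall x, in_kprime iota alpha x -> in_kprime iota alpha x^-1)
  (hinsep : purely_insep iota alpha p)
  (A : comAlgType L) (a : 'I_q -> A)
  (ha : C_pts iota c (Ordinal hq) a) :
  U_pts iota c (Ordinal hq) a <->
  a (Ordinal hq) = 1 - \sum_(i | i != Ordinal hq) a i * (alpha i)%:A.
Proof.
move: hq alpha c h1 hfree hconst hinv hinsep a ha.
case: q => [//|n] hq alpha c h1 hfree hconst hinv hinsep a ha.
set i0 := Ordinal hq.
have Hl : forall x : 'I_n.+1 -> L, \sum_i x i * alpha i = 1 ->
    C_pts (A := L^o) iota c i0 x /\ unipotent_pt iota c x.
  move=> x hx; have [e He] := unip hchar h1 hfree hconst hinsep hx.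
  split; last by exists (p ^ e)%N.
  exact: (cpts_of_nil i0 He).
split.
  case=> _ HU.
  pose lp : {mpoly L[n.+1]} := \sum_i 'X_i * (alpha i)%:MP - 1.
  have HI : U_ideal iota c i0 lp.
    move=> x _ hu; rewrite /lp mevalB meval1 raddf_sum /=.
    under eq_bigr => i _ do rewrite mevalM mevalXU mevalC.
    by rewrite (eig_lemma hconst h1 hu) subrr.
  have := HU lp HI; rewrite (_ : (fun z : L => z%:A) = in_alg A) // /lp raddfB raddf_sum /= rmorph1.
  under eq_bigr => i _ do rewrite rmorphM /= mmapC mmapX mmap1U.
  move/eqP; rewrite subr_eq0 (bigD1 i0) //= h1 scale1r mulr1 => /eqP Hs.
  by rewrite -{1}Hs addrK.
move=> E; split => // f Hf.
pose T := [tuple (if i == i0 then 1 - \sum_(j | j != i0) 'X_j * (alpha j)%:MP else 'X_i : {mpoly L[n.+1]}) | i < n.+1].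
have r0 : f \mPo T = 0.
  apply: (mpoly_vanish (@closed_inf L)) => v; rewrite comp_mpoly_meval.
  have Hw : \sum_i (tnth T i).@[v] * alpha i = 1.
    have Es : (\sum_(j | j != i0) 'X_j * (alpha j)%:MP : {mpoly L[n.+1]}).@[v] = \sum_(j | j != i0) v j * alpha j.
      by rewrite rmorph_sum; apply: eq_bigr => j _; rewrite /= mevalM mevalXU mevalC.
    rewrite (bigD1 i0) //= tnth_mktuple eqxx h1 mulr1 mevalB meval1 Es.
    rewrite -addrA -[RHS]addr0; congr (_ + _); rewrite addrC; apply/eqP; rewrite subr_eq0; apply/eqP.
    by apply: eq_bigr => i /negbTE Hi; rewrite tnth_mktuple Hi mevalXU.
  have [H1 H2] := Hl _ Hw; exact: Hf.
rewrite (_ : (fun z : L => z%:A) = in_alg A) //.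
have Hb : (fun i => mmap (in_alg A) a (tnth T i)) = a.
  apply: functional_extensionality => i; rewrite tnth_mktuple; case: eqP => [->|_].
    rewrite raddfB /= rmorph1 rmorph_sum E /=; congr (_ - _); apply: eq_bigr => j _.
    by rewrite rmorphM /= mmapC mmapX mmap1U.
  by rewrite mmapX mmap1U.
by have := mmap_comp (in_alg A) T a f; rewrite r0 raddf0 Hb => <-.
Qed.
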